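(* Let $G$ be a nontrivial cactus on $n$ vertices with $k$ cycles. Then \[R(G)\geq \frac{n-k-1}{2}+\sqrt k,\] with equality for a bouquet of cycles (a collection of $k$ cycles all sharing one common vertex and otherwise disjoint).
   Context: A cactus is a connected graph in which any two cycles share at most one vertex; it is nontrivial if it has no bridges (edges whose removal disconnects the graph). The Randi\'c index is $R(G)=\sum_{uv\in E(G)}\frac{1}{\sqrt{d_ud_v}}$, where $d_v$ is the degree of $v$. *)

(* Defs.v *)
From mathcomp Require Import all_boot all_order all_algebra.
Set Implicit Arguments. Unset Strict Implicit. Unset Printing Implicit Defensive.
Import Order.TTheory GRing.Theory Num.Theory.

Definition simple_graph (T : finType) (e : rel T) : Prop :=
  symmetric e /\ irreflexive e.

Definition connected_graph (T : finType) (e : rel T) : Prop :=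
  forall x y : T, connect e x y.

Definition del_edge (T : finType) (e : rel T) (u v : T) : rel T :=
  [rel x y | e x y && ([set x; y] != [set u; v])].

Definition is_bridge (T : finType) (e : rel T) (u v : T) : Prop :=
  e u v /\ ~ connected_graph (del_edge e u v).

Definition bridgeless (T : finType) (e : rel T) : Prop :=
  forall u v : T, ~ is_bridge e u v.

Definition cycle_edges (T : finType) (s : seq T) : {set {set T}} :=
  [set [set p.1; p.2] | p in zip s (rot 1 s)].

(* A cycle of the graph, represented by its edge set: the edges of a closed
   walk through at least 3 distinct vertices (a sequence s of distinct
   vertices, size s >= 3, consecutive ones adjacent and the last adjacent to
   the first).  Since the vertices are distinct, size s <= #|T|, so the
   existential can be taken over tuples of length < #|T|.+1, making it a
   boolean predicate. *)
Definition is_cycle (T : finType) (e : rel T) (C : {set {set T}}) : bool :=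
  [exists n : 'I_#|T|.+1, exists t : n.-tuple T,
     [&& uniq t, 2 < n, cycle e t & C == cycle_edges t]].

Definition cycle_vertices (T : finType) (C : {set {set T}}) : {set T} :=
  \bigcup_(E in C) E.

Definition num_cycles (T : finType) (e : rel T) : nat :=
  #|[set C : {set {set T}} | is_cycle e C]|.

Definition cactus (T : finType) (e : rel T) : Prop :=
  simple_graph e /\ connected_graph e /\
  forall C1 C2 : {set {set T}}, is_cycle e C1 -> is_cycle e C2 -> C1 != C2 ->
    #|cycle_vertices C1 :&: cycle_vertices C2| <= 1.

Definition nontrivial_cactus (T : finType) (e : rel T) : Prop :=
  cactus e /\ bridgeless e.

Local Open Scope ring_scope.

Definition degree (T : finType) (e : rel T) (v : T) : nat := #|[set w | e v w]|.

(* Randic index: sum over (unordered) edges uv of 1/sqrt(d_u d_v); each edge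
   is counted twice in the sum over ordered adjacent pairs, hence the 1/2. *)
Definition randic (R : rcfType) (T : finType) (e : rel T) : R :=
  (\sum_(p : T * T | e p.1 p.2)
      (Num.sqrt ((degree e p.1)%:R * (degree e p.2)%:R))^-1) / 2%:R.

Definition bouquet (T : finType) (e : rel T) : Prop :=
  simple_graph e /\
  exists (c : T) (F : {set {set {set T}}}),
    [/\ forall C, C \in F -> is_cycle e C /\ c \in cycle_vertices C,
        forall C1 C2, C1 \in F -> C2 \in F -> C1 != C2 ->
          cycle_vertices C1 :&: cycle_vertices C2 = [set c],
        forall x y, e x y <-> exists2 C, C \in F & [set x; y] \in C
      & forall v, v = c \/ exists2 C, C \in F & v \in cycle_vertices C].

(* Main.v *)
Require Import Defs.
From mathcomp Require Import all_boot all_order all_algebra.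
From mathcomp Require Import zify ring lra.
Set Implicit Arguments. Unset Strict Implicit. Unset Printing Implicit Defensive.


Section Basic.
Variable T : finType.
Implicit Types (e f : rel T) (t : seq T).

Lemma set2_eqE (x y u v : T) :
  ([set x; y] == [set u; v]) = ((x == u) && (y == v)) || ((x == v) && (y == u)).
Proof.
apply/eqP/idP => [E|].
  have hx : x \in [set u; v] by rewrite -E set21.
  have hy : y \in [set u; v] by rewrite -E set22.
  have hu : u \in [set x; y] by rewrite E set21.
  have hv : v \in [set x; y] by rewrite E set22.
  move: hx hy hu hv => /set2P[]-> /set2P[]-> /set2P[] hu /set2P[] hv;
    rewrite ?eqxx ?hu ?hv //=; subst; rewrite ?eqxx ?orbT //.
by case/orP => /andP[/eqP-> /eqP->] //; rewrite setUC.
Qed.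

Lemma zip_rot1 t : uniq t -> zip t (rot 1 t) = [seq (x, next t x) | x <- t].
Proof.
case: t => [|x0 p] // U.
apply: (@eq_from_nth _ (x0, x0)); first by rewrite size_map size_zip size_rot minnn.
rewrite size_zip size_rot minnn => i lti.
rewrite nth_zip ?size_rot // (nth_map x0) // next_nth mem_nth // index_uniq //.
rewrite rot1_cons nth_rcons; congr pair.
move: lti => /=; rewrite ltnS leq_eqVlt => /orP[/eqP->|->] //.
by rewrite ltnn eqxx nth_default.
Qed.

Lemma mem_ce t (x y : T) : uniq t ->
  ([set x; y] \in cycle_edges t) =
  ((x \in t) && (y == next t x)) || ((y \in t) && (x == next t y)).
Proof.
move=> U; rewrite /cycle_edges zip_rot1 //.
apply/imsetP/idP => [[p /mapP[z zt ->]] /= /eqP|].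
  rewrite set2_eqE => /orP[]/andP[/eqP-> /eqP->]; first by rewrite zt eqxx.
  by rewrite zt eqxx orbT.
case/orP => /andP[xt /eqP->].
  by exists (x, next t x) => //; apply: map_f.
by exists (y, next t y); [apply: map_f | rewrite /= setUC].
Qed.

Lemma mem_ce2 t (x y : T) : uniq t ->
  ([set x; y] \in cycle_edges t) =
  (x \in t) && ((y == next t x) || (y == prev t x)).
Proof.
move=> U; rewrite mem_ce //.
apply/idP/idP => [/orP[/andP[-> ->] //|/andP[yt /eqP xE]]|/andP[xt /orP[->|/eqP yE]]].
- by rewrite xE mem_next yt prev_next // eqxx orbT.
- by rewrite xt.
- by rewrite yE mem_prev xt next_prev // eqxx orbT.
Qed.

Lemma next_neq_prev t (x : T) : uniq t -> 2 < size t -> x \in t ->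
  next t x != prev t x.
Proof.
move=> U s3 xt.
rewrite -(next_rot (index x t) U) -(prev_rot (index x t) U).
have := rot_index xt; set q := (drop _ _ ++ _) => E.
have : uniq (x :: q) by rewrite -E rot_uniq.
have : 2 < size (x :: q) by rewrite -E size_rot.
rewrite E next_nth prev_nth mem_head => sq /andP[xn Uq].
have -> : index x (x :: q) = 0 by rewrite /= eqxx.
rewrite (memNindex xn).
have -> : nth x (x :: q) (size q) = last x (x :: q) by rewrite -nth_last.
case: q {E} sq xn Uq => [|y [|z r]] //= _ _ /andP[yn _].
apply: contra yn => /eqP->; exact: mem_last.
Qed.

Lemma ce_next t : uniq t -> cycle_edges t = [set [set x; next t x] | x in t].
Proof.
move=> U; apply/setP=> E; rewrite /cycle_edges zip_rot1 //.
apply/imsetP/imsetP => [[p /mapP[z zt ->] ->]|[z zt ->]]; first by exists z.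
by exists (z, next t z) => //; apply: map_f.
Qed.

Lemma ce_rot i t : uniq t -> cycle_edges (rot i t) = cycle_edges t.
Proof.
move=> U; rewrite !ce_next ?rot_uniq //; apply/setP=> E.
apply/imsetP/imsetP => [[z zt ->]|[z zt ->]]; exists z; rewrite ?mem_rot ?next_rot //.
by rewrite -(mem_rot i).
Qed.

Lemma ce_verts t : uniq t -> cycle_vertices (cycle_edges t) = [set x | x \in t].
Proof.
move=> U; apply/setP=> x; rewrite inE /cycle_vertices.
apply/bigcupP/idP => [[E]|xt].
  rewrite ce_next // => /imsetP[z zt ->] /set2P[]->; by rewrite ?mem_next.
by exists [set x; next t x]; rewrite ?set21 // ce_next //; apply: imset_f.
Qed.

Lemma deg_ce t (x : T) : uniq t -> 2 < size t ->
  #|[set y | [set x; y] \in cycle_edges t]| = (x \in t).*2.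
Proof.
move=> U s3; case xt: (x \in t).
  have -> : [set y | [set x; y] \in cycle_edges t] = [set next t x; prev t x].
    by apply/setP=> y; rewrite !inE mem_ce2 // xt.
  by rewrite cards2 next_neq_prev.
apply/eqP; rewrite cards_eq0; apply/eqP/setP=> y; rewrite !inE mem_ce2 // xt andFb //.
Qed.

Lemma ce_edge f t (x y : T) : uniq t -> cycle f t ->
  [set x; y] \in cycle_edges t -> f x y || f y x.
Proof.
move=> U cf; rewrite mem_ce2 // => /andP[xt /orP[]/eqP->].
  by rewrite (next_cycle cf xt).
by rewrite (prev_cycle cf xt) orbT.
Qed.

Lemma is_cycleP f C :
  reflect (exists t, [/\ uniq t, 2 < size t, cycle f t & C = cycle_edges t])
          (is_cycle f C).
Proof.
apply: (iffP existsP) => [[n /existsP[t /and4P[U s3 cf /eqP->]]]|[t [U s3 cf ->]]].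
  by exists t; rewrite size_tuple.
have st : size t < #|T|.+1 by rewrite ltnS -(card_uniqP U) max_card.
exists (Ordinal st); apply/existsP; exists (in_tuple t).
by rewrite /= U s3 cf eqxx.
Qed.

End Basic.


Section Cyclo.
Variable T : finType.
Implicit Types (e f : rel T) (t : seq T).

Definition indep f (S : {set T}) :=
  [forall x in S, forall y in S, (x != y) ==> ~~ connect f x y].
Definition comps f := \max_(S : {set T} | indep f S) #|S|.
Definition nedges f := #|[set p : T * T | f p.1 p.2]|.

Lemma indepP f (S : {set T}) : reflect (forall x y, x \in S -> y \in S -> x != y -> ~~ connect f x y)
  (indep f S).
Proof.
apply: (iffP forall_inP) => [H x y xS yS nxy|H x xS].
  by move: (H x xS) => /forall_inP/(_ y yS)/implyP/(_ nxy).
by apply/forall_inP => y yS; apply/implyP; apply: H.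
Qed.

Lemma comps_arg f : exists2 S, indep f S & comps f = #|S|.
Proof.
have i0 : indep f set0 by apply/indepP => x y; rewrite inE.
rewrite /comps (bigmax_eq_arg set0) //.
by case: arg_maxnP => // S IS _; exists S.
Qed.

Lemma comps_ge f (S : {set T}) : indep f S -> #|S| <= comps f.
Proof. by move=> IS; apply: leq_bigmax_cond. Qed.

Lemma add_indep f (S : {set T}) x : symmetric f -> indep f S ->
  (forall z, z \in S -> ~~ connect f z x) -> indep f (x |: S) /\ #|x |: S| = #|S|.+1.
Proof.
move=> sf /indepP IS H; have xS : x \notin S.
  by apply/negP => /H; rewrite connect0.
split; last by rewrite cardsU1 xS.
apply/indepP => a b; rewrite !inE => /orP[/eqP->|aS] /orP[/eqP->|bS]; rewrite ?eqxx //.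
- by move=> _; rewrite (sym_connect_sym sf) H.
- by move=> _; rewrite H.
- by apply: IS.
Qed.

Lemma comps_mono f g : subrel g f -> comps f <= comps g.
Proof.
move=> gf; have [S IS ->] := comps_arg f; apply: comps_ge.
apply/indepP => x y xS yS nxy; move/indepP: IS => /(_ x y xS yS nxy).
by apply: contra; apply: connect_sub => a b /gf /connect1.
Qed.

Lemma del_sym f u v : symmetric f -> symmetric (del_edge f u v).
Proof. by move=> sf x y; rewrite /del_edge /= sf setUC. Qed.

Lemma del_irr f u v : irreflexive f -> irreflexive (del_edge f u v).
Proof. by move=> irf x; rewrite /del_edge /= irf. Qed.

Lemma del_sub f u v : subrel (del_edge f u v) f.
Proof. by move=> x y /andP[]. Qed.

Lemma del_nedges f u v : symmetric f -> irreflexive f -> f u v ->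
  nedges f = (nedges (del_edge f u v)).+2.
Proof.
move=> sf irf fuv; have nuv : u != v by apply: contraTneq fuv => ->; rewrite irf.
rewrite /nedges; have -> : [set p : T * T | del_edge f u v p.1 p.2] =
          [set p : T * T | f p.1 p.2] :\ (u, v) :\ (v, u).
  apply/setP => [[x y]]; rewrite !inE /= !xpair_eqE /del_edge /= set2_eqE.
  by case: (x == u); case: (y == v); case: (x == v); case: (y == u); case: (f x y).
rewrite (cardsD1 (u, v)) (cardsD1 (v, u) (_ :\ (u, v))) !inE /= fuv sf fuv.
by rewrite xpair_eqE eq_sym (negbTE nuv).
Qed.

Lemma cycle_sub f g C : subrel g f -> is_cycle g C -> is_cycle f C.
Proof.
move=> gf /is_cycleP[t [U s3 cg ->]]; apply/is_cycleP; exists t; split => //.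
exact: sub_cycle cg.
Qed.

Lemma new_cycle f u v : symmetric f -> irreflexive f -> f u v ->
  connect (del_edge f u v) v u ->
  exists2 C, is_cycle f C & ~~ is_cycle (del_edge f u v) C.
Proof.
move=> sf irf fuv /connectP[p pp ul].
move: ul; case: (shortenP pp) => p' pp' Up' _ ul.
have nuv : u != v by apply: contraTneq fuv => ->; rewrite irf.
have s3 : 2 < size (v :: p').
  case: p' pp' Up' ul => [|w [|w' r]] //=; first by move=> _ _ E; rewrite E eqxx in nuv.
  rewrite andbT => + _ E; rewrite -E /del_edge /= setUC eqxx andbF //.
have cf : cycle f (v :: p').
  by rewrite /= rcons_path -ul fuv andbT; apply: sub_path pp'; apply: del_sub.
have mem : [set u; v] \in cycle_edges (v :: p').
  apply/imsetP; exists (u, v) => //.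
  rewrite rot1_cons lastI -ul zip_rcons ?size_belast //; by rewrite mem_rcons mem_head.
exists (cycle_edges (v :: p')); first by apply/is_cycleP; exists (v :: p').
apply/negP => /is_cycleP[t [U _ cg E]]; rewrite E in mem.
by move: (ce_edge U cg mem); rewrite /del_edge /= setUC eqxx !andbF.
Qed.

Lemma comps_split f u v : symmetric f -> f u v ->
  ~~ connect (del_edge f u v) v u -> comps f < comps (del_edge f u v).
Proof.
move=> sf fuv ncvu; set g := del_edge f u v.
have sg : symmetric g by apply: del_sym.
have cf := sym_connect_sym sf; have cg := sym_connect_sym sg.
have gf : forall x y, connect g x y -> connect f x y.
  by apply: connect_sub => a b /del_sub /connect1.
have [S IS ES] := comps_arg f.
have [w wS cwu] : exists2 w, w \in S & connect f w u.
  case: (boolP [exists z in S, connect f z u]) => [/exists_inP//|/exists_inPn H].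
  have [IS1 c1] := add_indep sf IS H.
  by have := comps_ge IS1; rewrite c1 ES ltnn.
have [x [cwx ncwx]] : exists x, connect f w x /\ ~~ connect g w x.
  case: (boolP (connect g w v)) => [cwv|]; last first.
    by exists v; split => //; apply: connect_trans cwu (connect1 fuv).
  exists u; split => //; apply/negP => cwu'.
  by move: ncvu; rewrite (connect_trans _ cwu') // cg.
have IS' : indep g S.
  apply/indepP => a b aS bS nab; move/indepP: IS => /(_ a b aS bS nab).
  by apply: contra; apply: gf.
have H : forall z, z \in S -> ~~ connect g z x.
  move=> z zS; case: (eqVneq z w) => [->//|nzw]; apply/negP => /gf czx.
  move/indepP: IS => /(_ z w zS wS nzw)/negP; apply.
  by apply: connect_trans czx _; rewrite cf.
have [IS1 c1] := add_indep sg IS' H.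
by have := comps_ge IS1; rewrite c1 ES.
Qed.

Lemma cyclo f : symmetric f -> irreflexive f ->
  nedges f + (comps f).*2 <= (num_cycles f).*2 + #|T|.*2.
Proof.
move=> + +; have [m] := ubnP (nedges f); elim: m f => // m IH f ltm sf irf.
case: (pickP (fun p : T * T => f p.1 p.2)) => [[u v] /= fuv|no].
  set g := del_edge f u v.
  have sg := del_sym u v sf; have ig := del_irr u v irf.
  have Eg := del_nedges sf irf fuv.
  have ltg : nedges g < m by move: ltm; rewrite Eg /g; lia.
  have IHg := IH g ltg sg ig.
  have cyc_sub : [set C | is_cycle g C] \subset [set C | is_cycle f C].
    by apply/subsetP => C; rewrite !inE; apply: cycle_sub; apply: del_sub.
  have cyc_le : num_cycles g <= num_cycles f by apply: subset_leq_card.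
  case: (boolP (connect g v u)) => [cvu|ncvu].
    have [C Cf Cg] := new_cycle sf irf fuv cvu.
    have cyc_lt : num_cycles g < num_cycles f.
      apply: proper_card; apply/properP; split => //; exists C; by rewrite inE.
    have := comps_mono (@del_sub f u v); rewrite -/g => cm.
    move: IHg cyc_lt cm; rewrite Eg /g -!muln2; lia.
  have := comps_split sf fuv ncvu; rewrite -/g => cm.
  move: IHg cyc_le cm; rewrite Eg /g -!muln2; lia.
have -> : nedges f = 0.
  by apply/eqP; rewrite cards_eq0; apply/eqP/setP => p; rewrite !inE no.
rewrite add0n; apply: leq_trans (leq_addl _ _); rewrite leq_double.
by apply/bigmax_leqP => S _; apply: max_card.
Qed.

End Cyclo.


Section Graph.
Variable T : finType.
Implicit Types (e f : rel T) (t : seq T).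

Lemma nedges_deg e : nedges e = \sum_a degree e a.
Proof.
have -> : nedges e = \sum_(p : T * T | e p.1 p.2) 1.
  by rewrite /nedges -sum1_card; apply: eq_bigl => p; rewrite inE.
have -> : \sum_a degree e a = \sum_a \sum_(b | e a b) 1.
  by apply: eq_bigr => a _; rewrite /degree -sum1_card; apply: eq_bigl => b; rewrite inE.
by rewrite pair_big_dep.
Qed.

Lemma deg_ge2 e a : simple_graph e -> connected_graph e -> bridgeless e ->
  1 < #|T| -> 1 < degree e a.
Proof.
move=> [se ie] ce br /card_gt1P [x [y [_ _ nxy]]].
have [w nwa] : exists w, w != a.
  by case: (eqVneq x a) => [xa|]; [exists y; rewrite -xa eq_sym | exists x].
have /connectP [[|b p] /= pp wl] := ce a w; first by rewrite wl eqxx in nwa.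
move: pp => /andP[eab _].
rewrite ltnNge; apply/negP => dle1.
have onlyb : forall z, e a z -> z = b.
  move=> z eaz; move/card_le1_eqP: dle1; apply; by rewrite inE.
apply: (br a b); split => // /(_ a w) /connectP [[|z q] /= qp wl'].
  by rewrite wl' eqxx in nwa.
move: qp => /andP[/andP[eaz]]; by rewrite (onlyb z eaz) eqxx.
Qed.

Lemma comps_ge1 e (x : T) : 1 <= comps e.
Proof.
have i1 : indep e [set x].
  by apply/indepP => a b; rewrite !inE => /eqP-> /eqP->; rewrite eqxx.
by have := comps_ge i1; rewrite cards1.
Qed.

End Graph.


Section Bouquet.
Variables (T : finType) (e : rel T) (c : T) (F : {set {set {set T}}}).
Hypotheses (se : symmetric e) (ie : irreflexive e).
Hypothesis H1 : forall C, C \in F -> is_cycle e C /\ c \in cycle_vertices C.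
Hypothesis H2 : forall C1 C2, C1 \in F -> C2 \in F -> C1 != C2 ->
          cycle_vertices C1 :&: cycle_vertices C2 = [set c].
Hypothesis H3 : forall x y, e x y <-> exists2 C, C \in F & [set x; y] \in C.
Hypothesis H4 : forall v, v = c \/ exists2 C, C \in F & v \in cycle_vertices C.

Lemma inV (C : {set {set T}}) x y : [set x; y] \in C ->
  x \in cycle_vertices C /\ y \in cycle_vertices C.
Proof.
by move=> h; split; apply/bigcupP; exists [set x; y]; rewrite ?set21 ?set22.
Qed.

Lemma same_C C1 C2 y : C1 \in F -> C2 \in F -> y \in cycle_vertices C1 ->
  y \in cycle_vertices C2 -> y != c -> C1 = C2.
Proof.
move=> F1 F2 y1 y2 nyc; apply/eqP/negPn/negP => n12.
by move: (H2 F1 F2 n12) => /setP/(_ y); rewrite !inE y1 y2 (negbTE nyc).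
Qed.

Lemma edge_C C y z : C \in F -> e y z -> y \in cycle_vertices C ->
  z \in cycle_vertices C -> [set y; z] \in C.
Proof.
move=> FC eyz yC zC; have [C2 F2 E2] := (H3 y z).1 eyz.
have [y2 z2] := inV E2.
case: (eqVneq C C2) => [->//|n12].
move: (H2 FC F2 n12) => /setP Hs.
have := Hs y; have := Hs z; rewrite !inE yC zC y2 z2 /= => /esym/eqP zc /esym/eqP yc.
by rewrite yc zc ie in eyz.
Qed.

Lemma sum_if_card (P : pred T) :
  (\sum_i (if P i then 1 else 0))%N = #|[set i | P i]|.
Proof. by rewrite -sum1_card [RHS]big_mkcond; apply: eq_bigr => i _; rewrite inE. Qed.

Lemma deg_B v : degree e v = (#|[set C in F | v \in cycle_vertices C]|).*2.
Proof.
rewrite /degree -sum1_card big_mkcond /=.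
rewrite (eq_bigr (fun y => \sum_(C in F) (if [set v; y] \in C then 1 else 0)))%N;
  last first.
  move=> y _; rewrite inE; case: (boolP (e v y)) => [evy|nevy].
    have [C0 F0 E0] := (H3 v y).1 evy.
    rewrite (bigD1 C0) //= E0 big1 // => C /andP[FC nC].
    case: ifP => // EC; exfalso.
    have [v1 y1] := inV EC; have [v0 y0] := inV E0.
    move: (H2 FC F0 nC) => /setP Hs.
    have := Hs v; have := Hs y; rewrite !inE v1 y1 v0 y0 /= => /esym/eqP yc /esym/eqP vc.
    by rewrite vc yc ie in evy.
  rewrite big1 // => C FC; case: ifP => // EC; exfalso.
  by move/negP: nevy; apply; apply/(H3 v y).2; exists C.
rewrite exchange_big /= -muln2 -sum1_card big_distrl /= [RHS]big_mkcond [LHS]big_mkcond /=.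
apply: eq_bigr => C _.
rewrite inE; case: (boolP (C \in F)) => FC //=.
have [/is_cycleP [t [U s3 _ ->]] _] := H1 FC.
rewrite sum_if_card deg_ce // ce_verts // inE.
by case: (v \in t).
Qed.

Lemma cnt_c : #|[set C in F | c \in cycle_vertices C]| = #|F|.
Proof.
by apply: eq_card => C; rewrite inE; case: (boolP (C \in F)) => // /H1[].
Qed.

Lemma cnt_v v : v != c -> #|[set C in F | v \in cycle_vertices C]| = 1%N.
Proof.
move=> nvc; case: (H4 v) => [vc|[C0 F0 v0]]; first by rewrite vc eqxx in nvc.
rewrite -(cards1 C0); apply: eq_card => C; rewrite !inE.
apply/andP/eqP => [[FC vC]|->]; last by [].
exact: same_C FC F0 vC v0 nvc.
Qed.

Lemma step_same C y z : C \in F -> y != c -> y \in cycle_vertices C -> e y z ->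
  z \in cycle_vertices C.
Proof.
move=> FC nyc yC eyz; have [C2 F2 E2] := (H3 y z).1 eyz.
have [y2 z2] := inV E2.
by rewrite (same_C FC F2 yC y2 nyc).
Qed.

Lemma path_same C y q : C \in F -> y != c -> y \in cycle_vertices C ->
  path e y q -> c \notin q -> {subset q <= cycle_vertices C}.
Proof.
move=> FC; elim: q y => [|z q IH] y nyc yC //= /andP[eyz pq].
rewrite inE negb_or eq_sym => /andP[nzc ncq] w; rewrite inE => /orP[/eqP->|wq].
  exact: step_same eyz.
exact: (IH z nzc (step_same FC nyc yC eyz) pq ncq).
Qed.

Lemma fpath_closed (f : T -> T) (S : pred T) x p :
  (forall y, S y -> S (f y)) -> S x -> fpath f x p -> S (last x p).
Proof.
move=> cl; elim: p x => [|z p IH] x //= Sx /andP[/eqP fx pp].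
by apply: IH pp; rewrite -fx cl.
Qed.

Lemma cyc_in_F C' : is_cycle e C' -> C' \in F.
Proof.
case/is_cycleP => t' [U' s3' ct' ->].
have [C FC sub] : exists2 C, C \in F & {subset t' <= cycle_vertices C}.
  case: (boolP (c \in t')) => ct.
    have E := rot_index ct; move: E; set q := (drop _ _ ++ _) => E.
    have Uq : uniq (c :: q) by rewrite -E rot_uniq.
    have sq : 2 < size (c :: q) by rewrite -E size_rot.
    have cq : cycle e (c :: q) by rewrite -E rot_cycle.
    move: E Uq sq cq; case: q => [|y q2] // E.
    rewrite /= inE negb_or => /andP[/andP[ncy ncq2] _] _.
    move=> /andP[ecy]; rewrite rcons_path => /andP[pq2 _].
    case: (H4 y) => [yc|[C FC yC]]; first by rewrite yc eqxx in ncy.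
    have nyc : y != c by rewrite eq_sym.
    exists C => // z; rewrite -(mem_rot (index c t')) E !inE.
    case/orP => [/eqP->|/orP[/eqP->//|zq]]; first by case: (H1 FC).
    exact: path_same pq2 ncq2 _ zq.
  move: ct' ct s3'; case: t' {U'} => [|y q] //=.
  rewrite rcons_path inE negb_or eq_sym => /andP[pq _] /andP[nyc ncq] _.
  case: (H4 y) => [yc|[C FC yC]]; first by rewrite yc eqxx in nyc.
  exists C => // z; rewrite inE => /orP[/eqP->//|zq].
  exact: path_same pq ncq _ zq.
have edgeC : forall y z, y \in t' -> z \in t' -> e y z -> [set y; z] \in C.
  by move=> y z yt zt eyz; apply: edge_C => //; apply: sub.
have [/is_cycleP [t [U s3 ct Et]] _] := H1 FC.
rewrite Et in FC sub edgeC *.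
have sub' : {subset t' <= t}.
  by move=> y /sub; rewrite ce_verts // inE.
have na : forall y, y \in t' -> (next t' y == next t y) || (next t' y == prev t y).
  move=> y yt; have := edgeC y (next t' y) yt; rewrite mem_next yt.
  by move=> /(_ isT (next_cycle ct' yt)); rewrite mem_ce2 // (sub' y yt).
have nb : forall y, y \in t' -> (next t y == next t' y) || (next t y == prev t' y).
  move=> y yt; have a1 := na y yt.
  have := edgeC y (prev t' y) yt; rewrite mem_prev yt se.
  move=> /(_ isT (prev_cycle ct' yt)); rewrite mem_ce2 // (sub' y yt) /= => b1.
  have d1 := next_neq_prev U' s3' yt.
  move: a1 b1 d1 => /orP[/eqP a|/eqP a] /orP[/eqP b|/eqP b];
    rewrite ?a ?b ?eqxx ?orbT //.
have cl : forall y, y \in t' -> next t y \in t'.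
  move=> y yt; case/orP: (nb y yt) => /eqP->; by rewrite ?mem_next ?mem_prev.
have sub'' : {subset t <= t'}.
  move=> z zt; case: t' {U' ct' na nb edgeC} s3' sub sub' cl => [|y0 q] // _ _ sub' cl.
  have y0t := sub' y0 (mem_head y0 q).
  have := fconnect_cycle (cycle_next U) y0t z; rewrite zt => /connectP[p pp ->].
  exact: fpath_closed cl (mem_head y0 q) pp.
suff -> : cycle_edges t' = cycle_edges t by [].
apply/setP => E; rewrite !ce_next //; apply/imsetP/imsetP => [[y yt ->]|[x xt ->]].
  have yt2 := sub' y yt.
  case/orP: (na y yt) => /eqP->; first by exists y.
  exists (prev t y); first by rewrite mem_prev.
  by rewrite next_prev // setUC.
have xt2 := sub'' x xt.
case/orP: (nb x xt2) => /eqP->; first by exists x.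
exists (prev t' x); first by rewrite mem_prev.
by rewrite next_prev // setUC.
Qed.

End Bouquet.

Import Order.TTheory GRing.Theory Num.Theory.
Local Open Scope ring_scope.


Section Real.
Variable R : rcfType.

Lemma sqrt_ge1 (x : R) : 1 <= x -> 1 <= Num.sqrt x.
Proof. by move=> h; rewrite -sqrtr1; apply: ler_wsqrtr. Qed.

Lemma pair_id (x y : R) : 0 < x -> 0 < y ->
  (Num.sqrt (x * y))^-1 =
  (((Num.sqrt (x / 2))^-1 + (Num.sqrt (y / 2))^-1 - 1) +
   (1 - (Num.sqrt (x / 2))^-1) * (1 - (Num.sqrt (y / 2))^-1)) / 2.
Proof.
move=> x0 y0.
have -> : x * y = 2 ^+ 2 * ((x / 2) * (y / 2)) by field.
rewrite (sqrtrM ((x / 2) * (y / 2))) ?exprn_ge0 // sqrtr_sqr ger0_norm // (sqrtrM (y / 2)) ?divr_ge0 ?ltW //.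
have a0 : 0 < Num.sqrt (x / 2) by rewrite sqrtr_gt0 divr_gt0.
have b0 : 0 < Num.sqrt (y / 2) by rewrite sqrtr_gt0 divr_gt0.
move: a0 b0; set a := Num.sqrt _; set b := Num.sqrt _ => a0 b0.
field; by rewrite ?gt_eqF.
Qed.

Lemma sqsum (I : finType) (F : I -> R) : (forall i, 1 <= F i) ->
  (\sum_i (F i - 1) ^+ 2) + 2 * Num.sqrt (\sum_i (F i - 1) ^+ 2)
    <= \sum_i (F i ^+ 2 - 1).
Proof.
move=> F1.
pose K (q p : R) := (0 <= q) && (q + 2 * Num.sqrt q <= p).
suff /andP[] : K (\sum_i (F i - 1) ^+ 2) (\sum_i (F i ^+ 2 - 1)) by [].
apply: (big_rec2 K); first by rewrite /K sqrtr0 mulr0 addr0 lexx.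
move=> i q p _ /andP[q0 qp]; set r := F i - 1.
have r0 : 0 <= r by rewrite subr_ge0.
have sq0 := sqrtr_ge0 q.
have sqq := sqr_sqrtr q0.
have H : Num.sqrt (r ^+ 2 + q) <= r + Num.sqrt q.
  rewrite -(ger0_norm (addr_ge0 r0 sq0)) -sqrtr_sqr; apply: ler_wsqrtr.
  nra.
have Fr : F i = r + 1 by rewrite /r subrK.
apply/andP; split; first by rewrite addr_ge0 ?sqr_ge0.
rewrite Fr; nra.
Qed.

Variable T : finType.
Implicit Types (e : rel T).

Definition dg e (a : T) : R := (degree e a)%:R.
Definition sd e (a : T) : R := Num.sqrt (dg e a / 2).

Lemma sum_fst e (G : T -> R) :
  \sum_(p : T * T | e p.1 p.2) G p.1 = \sum_a dg e a * G a.
Proof.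
rewrite -(pair_big_dep xpredT (fun a b => e a b) (fun a _ => G a)) /=.
apply: eq_bigr => a _.
rewrite (eq_bigl (fun b => b \in [set w | e a w])); last by move=> b; rewrite inE.
by rewrite sumr_const /dg mulr_natl.
Qed.

Lemma sum_snd e (G : T -> R) : symmetric e ->
  \sum_(p : T * T | e p.1 p.2) G p.2 = \sum_(p : T * T | e p.1 p.2) G p.1.
Proof.
move=> se.
have inj : injective (fun p : T * T => (p.2, p.1)) by move=> [a b] [c d] [-> ->].
rewrite (reindex_inj inj) /=; apply: eq_bigl => p; by rewrite se.
Qed.

Lemma sumL e : symmetric e -> (forall a, (0 < degree e a)%N) ->
  \sum_(p : T * T | e p.1 p.2) ((sd e p.1)^-1 + (sd e p.2)^-1 - 1) =
  4 * \sum_a sd e a - \sum_a dg e a.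
Proof.
move=> se dpos.
rewrite sumrB big_split /= (sum_snd (fun a => (sd e a)^-1) se) (sum_fst e (fun a => (sd e a)^-1)).
have -> : \sum_(p : T * T | e p.1 p.2) (1 : R) = \sum_a dg e a.
  by rewrite (sum_fst e (fun _ => 1)); apply: eq_bigr => a _; rewrite mulr1.
congr (_ - _); rewrite -big_split /= mulr_sumr.
apply: eq_bigr => a _.
have d0 : 0 < dg e a by rewrite /dg ltr0n.
have s0 : 0 < sd e a by rewrite /sd sqrtr_gt0 divr_gt0.
have ss : sd e a ^+ 2 = dg e a / 2 by rewrite /sd sqr_sqrtr // divr_ge0 // ltW.
have -> : dg e a = 2 * sd e a ^+ 2 by rewrite ss; field.
field; by rewrite gt_eqF.
Qed.

Lemma randic_split e : symmetric e -> (forall a, (0 < degree e a)%N) ->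
  randic R e = (\sum_a sd e a - (\sum_a dg e a) / 4) +
   (\sum_(p : T * T | e p.1 p.2) (1 - (sd e p.1)^-1) * (1 - (sd e p.2)^-1)) / 4.
Proof.
move=> se dpos; rewrite /randic.
rewrite (eq_bigr (fun p => (((sd e p.1)^-1 + (sd e p.2)^-1 - 1) +
   (1 - (sd e p.1)^-1) * (1 - (sd e p.2)^-1)) / 2)); last first.
  by move=> p _; rewrite pair_id // ltr0n.
rewrite -mulr_suml big_split /= sumL //; by field.
Qed.

End Real.


Section Part1.
Variables (R : rcfType) (T : finType).
Implicit Types (e : rel T).

Lemma small_T e : irreflexive e -> (#|T| <= 1)%N ->
  randic R e = 0 /\ num_cycles e = 0%N.
Proof.
move=> ie /card_le1_eqP T1; split.
  rewrite /randic big_pred0 ?mul0r // => [[x y]] /=.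
  by rewrite (T1 x y) ?inE // ie.
apply/eqP; rewrite cards_eq0; apply/eqP/setP => C; rewrite !inE.
apply/negbTE/negP => /is_cycleP[[|x [|y t]] [U s3 _ _]] //.
by move: U; rewrite /= inE (T1 x y) ?inE // eqxx.
Qed.

Lemma sd_ge1 e a : (1 < degree e a)%N -> 1 <= sd R e a.
Proof.
move=> d2; apply: sqrt_ge1; rewrite ler_pdivlMr // mul1r /dg.
by rewrite (ler_nat R 2).
Qed.

Lemma part1 e : nontrivial_cactus e ->
  (#|T|%:R - (num_cycles e)%:R - 1) / 2%:R + Num.sqrt (num_cycles e)%:R
     <= randic R e.
Proof.
case=> [[[se ie] [ce _]] br].
case: (leqP #|T| 1) => [T1|T2].
  have [-> ->] := small_T ie T1.
  rewrite sqrtr0 addr0 subr0 pmulr_lle0 ?invr_gt0 // subr_le0.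
  by rewrite (ler_nat R _ 1).
have dge2 : forall a, (1 < degree e a)%N.
  by move=> a; apply: deg_ge2.
have dpos : forall a, (0 < degree e a)%N by move=> a; apply: ltnW.
have [x _] : exists x : T, true.
  by case/card_gt1P: T2 => x [y [_ _ _]]; exists x.
have Hn : (\sum_a degree e a + 2 <= (num_cycles e).*2 + #|T|.*2)%N.
  have := cyclo se ie; have := comps_ge1 e x; rewrite nedges_deg -!muln2; lia.
set k := num_cycles e in Hn *; set n := #|T| in Hn *.
set D := \sum_a dg R e a; set A := \sum_a sd R e a.
have HD : D + 2 <= 2 * k%:R + 2 * n%:R.
  rewrite /D /dg -natr_sum -[2]/(2%:R) -!natrM -!natrD ler_nat; move: Hn; rewrite -!muln2; lia.
set Q := \sum_a (sd R e a - 1) ^+ 2.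
have HQ := sqsum (fun a => sd_ge1 (dge2 a)); rewrite -/Q in HQ.
have HP : \sum_a (sd R e a ^+ 2 - 1) = D / 2 - n%:R.
  rewrite sumrB sumr_const -/n mulr_suml; congr (_ - _).
  apply: eq_bigr => a _; rewrite sqr_sqrtr // divr_ge0 // ler0n.
have HQ2 : Q = D / 2 - n%:R - 2 * (A - n%:R).
  rewrite -HP /Q /A -[n%:R](sumr_const T (1 : R)) -sumrB mulr_sumr -sumrB.
  by apply: eq_bigr => a _; ring.
rewrite HP in HQ.
have N0 : 0 <= \sum_(p : T * T | e p.1 p.2) (1 - (sd R e p.1)^-1) * (1 - (sd R e p.2)^-1).
  apply: sumr_ge0 => p _; apply: mulr_ge0; rewrite subr_ge0 invf_le1 ?sd_ge1 //;
  by apply: lt_le_trans (sd_ge1 _ ); rewrite ?ltr01.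
move: (randic_split R se dpos) => ->; rewrite -/A -/D.
set q := Num.sqrt Q in HQ *; set sk := Num.sqrt k%:R.
have q0 : 0 <= q := sqrtr_ge0 Q.
have Q0 : 0 <= Q by apply: sumr_ge0 => a _; apply: sqr_ge0.
have qq : q ^+ 2 = Q by rewrite sqr_sqrtr.
have sk0 : 0 <= sk := sqrtr_ge0 _.
have skk : sk ^+ 2 = k%:R by rewrite sqr_sqrtr // ler0n.
have qsk : q + 1 <= sk.
  rewrite -(ger0_norm (addr_ge0 q0 ler01)) -sqrtr_sqr; apply: ler_wsqrtr.
  rewrite sqrrD1 qq; lra.
have : Q <= (sk - 1) ^+ 2 by rewrite -qq; nra.
lra.
Qed.

End Part1.


Section Part2.
Variables (R : rcfType) (T : finType).
Implicit Types (e : rel T).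

Lemma part2 e : bouquet e ->
  randic R e =
  (#|T|%:R - (num_cycles e)%:R - 1) / 2%:R + Num.sqrt (num_cycles e)%:R.
Proof.
case=> [[se ie] [c [F [H1 H2 H3 H4]]]].
have Hk : num_cycles e = #|F|.
  rewrite /num_cycles; apply: eq_card => C; rewrite inE.
  apply/idP/idP => [|/H1[]//]; exact: (cyc_in_F se ie H1 H2 H3 H4).
rewrite Hk; set K := #|F|.
case: (posnP K) => [K0|Kpos].
  have allc : forall v, v = c.
    move=> v; case: (H4 v) => [//|[C FC _]].
    by move/eqP: K0; rewrite cards_eq0 => /eqP F0; rewrite F0 inE in FC.
  have T1 : #|T| = 1%N.
    apply/eqP; rewrite eqn_leq; apply/andP; split.
      by apply/card_le1_eqP => x y _ _; rewrite (allc x) (allc y).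
    by apply/card_gt0P; exists c.
  have [-> _] := small_T R ie (eq_leq T1).
  by rewrite T1 K0 sqrtr0 addr0 subr0 subrr mul0r.
have degc : degree e c = K.*2.
  by rewrite (deg_B ie H1 H2 H3) (cnt_c H1).
have degv : forall v, v != c -> degree e v = 2%N.
  by move=> v nvc; rewrite (deg_B ie H1 H2 H3) (cnt_v H2 H4 nvc).
have dpos : forall a, (0 < degree e a)%N.
  by move=> a; case: (eqVneq a c) => [->|/degv->]; rewrite ?degc ?double_gt0.
have sdv : forall v, v != c -> sd R e v = 1.
  by move=> v nvc; rewrite /sd /dg degv // divff ?sqrtr1 // pnatr_eq0.
have dgv : forall v, v != c -> dg R e v = 2.
  by move=> v nvc; rewrite /dg degv.
have sdc : sd R e c = Num.sqrt K%:R.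
  by rewrite /sd /dg degc -muln2 natrM mulfK // pnatr_eq0.
have dgc : dg R e c = 2 * K%:R by rewrite /dg degc -muln2 natrM mulrC.
move: (randic_split R se dpos) => ->.
have -> : \sum_(p : T * T | e p.1 p.2) (1 - (sd R e p.1)^-1) * (1 - (sd R e p.2)^-1) = 0.
  apply: big1 => [[x y]] /= exy.
  case: (eqVneq x c) => [xc|nxc]; last by rewrite sdv // invr1 subrr mul0r.
  case: (eqVneq y c) => [yc|nyc]; last by rewrite (sdv y) // invr1 subrr mulr0.
  by rewrite xc yc ie in exy.
rewrite (bigD1 c) //= sdc [X in X / 4](bigD1 c) //= dgc.
rewrite (eq_bigr (fun _ => 1) sdv) (eq_bigr (fun _ => 2) dgv).
have -> : #|T|%:R = 1 + \sum_(a | a != c) (1 : R) :> R.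
  by rewrite -(sumr_const T (1 : R)) (bigD1 c).
have -> : \sum_(a | a != c) (2 : R) = 2 * \sum_(a | a != c) 1.
  by rewrite mulr_sumr; apply: eq_bigr => *; rewrite mulr1.
set r := \sum_(a | a != c) (1 : R).
lra.
Qed.

End Part2.

Theorem corollary4p4 (R : rcfType) :
  (forall (T : finType) (e : rel T), nontrivial_cactus e ->
     ((#|T|%:R - (num_cycles e)%:R - 1) / 2%:R + Num.sqrt (num_cycles e)%:R
        <= randic R e)) /\
  (forall (T : finType) (e : rel T), bouquet e ->
     randic R e =
       (#|T|%:R - (num_cycles e)%:R - 1) / 2%:R + Num.sqrt (num_cycles e)%:R).
Proof.
split => T e H; [exact: part1 | exact: part2].
Qed.
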